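(* Let $J$ be a countable set and $\mathcal{A}$ the non-unital algebra of finitely supported functions $J\to\mathbb{R}$ with pointwise operations. Let $\sigma:J\to J$ be a bijection and $\tilde{\sigma}(f)=f\circ\sigma^{-1}$. In the skew polynomial ring $\mathcal{A}[x,\tilde{\sigma},0]$, the centralizer of $\mathcal{A}$ is $$C(\mathcal{A})=\Big\{\sum_{k=0}^m f_kx^k : f_k\in\mathcal{A},\ f_k=0\text{ on } Sep^k(J)\text{ for all }k\Big\}.$$
   Context: $\mathcal{A}[x,\tilde{\sigma},0]$ is the set of formal sums $\sum_{k=0}^m f_kx^k$ with $f_k\in\mathcal{A}$, with coefficientwise addition and with multiplication the bilinear extension of $(fx^k)(gx^l)=f\,\tilde{\sigma}^k(g)\,x^{k+l}$; $\mathcal{A}$ is identified with the degree-$0$ elements. The centralizer of $\mathcal{A}$ is the set of elements commuting with every element of $\mathcal{A}$. For an integer $k$, $Sep^k(J)=\{p\in J:\sigma^k(p)\neq p\}$ (so $Sep^0(J)=\emptyset$). *)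

(* Defs.v *)
From mathcomp Require Import all_boot all_order all_algebra.
From mathcomp Require Import Rstruct.
From Stdlib Require Rdefinitions.
Local Notation R := Rdefinitions.R.
Set Implicit Arguments. Unset Strict Implicit. Unset Printing Implicit Defensive.
Import GRing.Theory.
Local Open Scope ring_scope.

Section Skew.
Variable J : countType.

Definition fin_supp (f : J -> R) : Prop :=
  exists s : seq J, forall j, f j != 0 -> j \in s.

(* An element of A[x, sigma~, 0] is a formal sum sum_{k=0}^m f_k x^k,
   represented by its coefficient sequence k |-> f_k (zero for k > m). *)
Definition skew_elt (p : nat -> J -> R) : Prop :=
  (exists m : nat, forall k : nat, (m < k)%N -> p k = (fun _ => 0)) /\
  (forall k, fin_supp (p k)).

(* sigma~^k (g) = g o sigma^{-k}, where sigmai is the inverse of sigma. *)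
Definition sigmat_pow (sigmai : J -> J) (k : nat) (g : J -> R) : J -> R :=
  fun j => g (iter k sigmai j).

(* Multiplication: bilinear extension of (f x^k)(g x^l) = f sigma~^k(g) x^(k+l). *)
Definition skew_mul (sigmai : J -> J) (p q : nat -> J -> R) : nat -> J -> R :=
  fun n j => \sum_(k < n.+1) p k j * sigmat_pow sigmai k (q (n - k)%N) j.

(* A identified with the degree-0 elements. *)
Definition deg0 (a : J -> R) : nat -> J -> R :=
  fun n => if n == 0%N then a else (fun _ => 0).

Definition in_centralizer (sigmai : J -> J) (p : nat -> J -> R) : Prop :=
  skew_elt p /\
  forall a : J -> R, fin_supp a ->
    skew_mul sigmai p (deg0 a) = skew_mul sigmai (deg0 a) p.

Definition Sep (sigma : J -> J) (k : nat) : pred J :=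
  fun j => iter k sigma j != j.

End Skew.

(* Main.v *)
Require Import Defs.
From mathcomp Require Import all_boot all_order all_algebra.
From mathcomp Require Import Rstruct.
From Stdlib Require Rdefinitions.
From Stdlib Require Import FunctionalExtensionality.
Local Notation R := Rdefinitions.R.
Local Open Scope ring_scope.
Import GRing.Theory.

Lemma mul_l (J : countType) (sigmai : J -> J) p a n j :
  skew_mul sigmai p (deg0 a) n j = p n j * a (iter n sigmai j).
Proof.
rewrite /skew_mul big_ord_recr /= subnn /deg0 /= /sigmat_pow /=.
rewrite big1 ?add0r // => i _.
have : (n - i)%N != 0%N by rewrite subn_eq0 -ltnNge ltn_ord.
by move/negbTE => ->; rewrite mulr0.
Qed.

Lemma mul_r (J : countType) (sigmai : J -> J) p a n j :
  skew_mul sigmai (deg0 a) p n j = a j * p n j.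
Proof.
rewrite /skew_mul big_ord_recl /= subn0 /deg0 /= /sigmat_pow /=.
by rewrite big1 ?addr0 // => i _; rewrite mul0r.
Qed.

Lemma iterK (J : countType) (sigma sigmai : J -> J) :
  cancel sigmai sigma -> forall k x, iter k sigma (iter k sigmai x) = x.
Proof.
move=> H; elim=> [|k IH] x //=.
by rewrite -iterS iterSr H IH.
Qed.

Theorem theorem7 (J : countType) (sigma sigmai : J -> J)
    (Hs1 : cancel sigma sigmai) (Hs2 : cancel sigmai sigma)
    (p : nat -> J -> R) :
  in_centralizer sigmai p <->
  (skew_elt p /\ forall (k : nat) (j : J), j \in Sep sigma k -> p k j = 0).
Proof.
have Hi : forall k j, (iter k sigmai j == j) = (iter k sigma j == j).
  move=> k j; apply/eqP/eqP => E.
    by rewrite -{1}E iterK.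
  by rewrite -{1}E (@iterK J sigmai sigma Hs1).
split.
  case=> Hsk Hc; split => // k j.
  rewrite /Sep unfold_in => Hj.
  pose a := fun x : J => if x == j then (1 : R) else 0.
  have fa : fin_supp a.
    exists [:: j] => x; rewrite /a mem_seq1; case: (x == j) => //; by rewrite eqxx.
  have := congr1 (fun q => q k j) (Hc a fa) => /=.
  rewrite mul_l mul_r /a eqxx Hi (negbTE Hj) mulr0 mul1r.
  by move=> ->.
case=> Hsk Hz; split => // a fa.
apply: functional_extensionality => n; apply: functional_extensionality => j.
rewrite mul_l mul_r.
case E: (iter n sigma j == j).
  by move: E; rewrite -Hi => /eqP ->; rewrite mulrC.
rewrite Hz ?mul0r ?mulr0 //.
by rewrite /Sep unfold_in E.
Qed.
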